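(* Let $t$ be a positive integer. The number of odd entries on row $n$ of the truncated Pascal triangle $(\mathfrak{a}_t(n,k))$ is a power of two for every nonnegative integer $n$ if and only if $t$ is a power of two (i.e. $t=2^q$ for some integer $q\ge 0$). Moreover, in this case, for every nonnegative integer $n$ the number of odd entries on row $n$ is exactly $\frac12\cdot 2^{d(n+t)}$.
   Context: Fix a positive integer $t$. Let $\mathfrak{a}_t:\mathbb{Z}\times\mathbb{Z}\to\mathbb{Z}$ be the unique function satisfying: (i) $\mathfrak{a}_t(0,0)=1$; (ii) $\mathfrak{a}_t(n,k)=0$ if $n<0$, or $k<0$, or $k>\min\{\lfloor (n-1+t)/2\rfloor, n\}$; (iii) $\mathfrak{a}_t(n,k)=\mathfrak{a}_t(n-1,k-1)+\mathfrak{a}_t(n-1,k)$ for all other integer pairs $(n,k)$ (these necessarily have $n>0$). The truncated Pascal triangle is the array $(\mathfrak{a}_t(n,k))_{0\le k\le n}$; row $n$ consists of the entries $\mathfrak{a}_t(n,k)$ for $0\le k\le n$, and ''the number of odd entries on row $n$'' means the number of $k\in\{0,\dots,n\}$ with $\mathfrak{a}_t(n,k)$ odd. For a nonnegative integer $m$, $d(m)$ denotes the number of nonzero digits (ones) in the base-$2$ representation of $m$ (with $d(0)=0$). *)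

(* Defs.v *)
From mathcomp Require Import all_boot.
Set Implicit Arguments. Unset Strict Implicit. Unset Printing Implicit Defensive.

(* Truncated Pascal triangle a_t(n,k), for n, k nonnegative (a_t vanishes
   for negative arguments, so restricting to nat loses nothing).
   a_t(0,k) = [k == 0];
   for n > 0: a_t(n,k) = 0 if k > min((n-1+t)/2, n),
              else a_t(n-1,k-1) + a_t(n-1,k)   (with a_t(n-1,-1) = 0). *)
Fixpoint trunc_pascal (t n k : nat) : nat :=
  match n with
  | 0 => (k == 0)
  | n'.+1 =>
      if k <= minn ((n' + t)./2) n then
        (if k is k'.+1 then trunc_pascal t n' k' else 0) + trunc_pascal t n' k
      else 0
  end.

Definition odd_entries (t n : nat) : nat :=
  count (fun k => odd (trunc_pascal t n k)) (iota 0 n.+1).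

Fixpoint bin_digits_aux (fuel m : nat) : nat :=
  match fuel with
  | 0 => 0
  | f.+1 => if m == 0 then 0 else odd m + bin_digits_aux f m./2
  end.
Definition d (m : nat) : nat := bin_digits_aux m m.

Definition is_pow2 (m : nat) : Prop := exists e : nat, m = 2 ^ e.

(* Main.v *)
Require Import Defs.
From mathcomp Require Import all_boot zify.

Definition Bt (t n k : nat) := if t <= k then 'C(n, k - t) else 0.
Definition Qt t n k := odd ('C(n, k) + Bt t n k).

Lemma nat_split k : (exists j, k = j.*2) \/ (exists j, k = j.*2.+1).
Proof.
rewrite -(odd_double_half k); case: (odd k) => /=; [right|left]; by exists k./2.
Qed.

Lemma halfS2 j : (j.*2.+1)./2 = j.
Proof. by rewrite /= uphalf_double. Qed.

Lemma Bt_pascal t n k : Bt t n.+1 k.+1 = Bt t n k + Bt t n k.+1.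
Proof.
rewrite /Bt; case: (leqP t k) => H.
- have -> : (t <= k.+1) = true by lia.
  have -> : k.+1 - t = (k - t).+1 by lia.
  by rewrite binS addnC.
- have [Ht|Ht] : t = k.+1 \/ t != k.+1 by case: eqP; [left|right].
  + by rewrite Ht ltnSn subnn !bin0.
  + by have -> : (t <= k.+1) = false by move/eqP: Ht; lia.
Qed.

Lemma Bt0 t m : 0 < t -> Bt t m 0 = 0.
Proof. by rewrite /Bt; case: leqP => //; lia. Qed.

Lemma Bt_edge t n k : 0 < t -> k <= n.+1 -> k.*2 <= n + t ->
  ~~ ((k <= n) && (k.*2 < n + t)) -> Bt t n k = 'C(n, k).
Proof.
move=> ht h1 h2 h3; rewrite /Bt.
case: (leqP k n) => hk.
- have e : k.*2 = n + t by lia.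
  have -> : (t <= k) = true by lia.
  have -> : k - t = n - k by lia.
  by rewrite bin_sub.
- have -> : (t <= k) = false by lia.
  by rewrite bin_small.
Qed.

Lemma trunc_spec t n k : 0 < t ->
  (((k <= n) && (k.*2 < n + t)) -> trunc_pascal t n k + Bt t n k = 'C(n, k)) /\
  (~~ ((k <= n) && (k.*2 < n + t)) -> trunc_pascal t n k = 0).
Proof.
move=> ht; elim: n k => [|n IH] k.
- split.
  + move=> /andP [h1 _]; have -> : k = 0 by lia.
    by rewrite Bt0.
  + case: k => [|k] H //=. exfalso; move: H; rewrite /=; lia.
- have E : (k <= minn ((n + t)./2) n.+1) = (k <= n.+1) && (k.*2 < n.+1 + t).
    rewrite leq_min geq_half_double andbC.
    by apply/idP/idP => /andP [? ?]; apply/andP; split; lia.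
  rewrite /= E {E}; split; last by move=> Hc; rewrite (negbTE Hc).
  move=> Hc; rewrite Hc; case/andP: Hc => H1 H2.
  case: k H1 H2 => [|k] H1 H2.
  + rewrite add0n Bt0 // addn0 bin0.
    have := (IH 0).1; rewrite Bt0 // addn0 bin0; apply; apply/andP; split; lia.
  + rewrite Bt_pascal binS.
    have A := (IH k).1; have B := (IH k.+1).2; have C := (IH k.+1).1.
    have A' : trunc_pascal t n k + Bt t n k = 'C(n, k) by apply: A; apply/andP; split; lia.
    case Hk: ((k.+1 <= n) && (k.+1.*2 < n + t)).
    * have := C Hk; lia.
    * have Hk' : ~~ ((k.+1 <= n) && (k.+1.*2 < n + t)) by rewrite Hk.
      have := B Hk'; have := @Bt_edge t n k.+1 ht H1 _ Hk'.
      have H3 : k.+1.*2 <= n + t by lia.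
      move=> /(_ H3); lia.
Qed.

Lemma lucas_odd_of m : (forall k, odd 'C(m.*2, k) = ~~ odd k && odd 'C(m, k./2)) ->
  forall k, odd 'C(m.*2.+1, k) = odd 'C(m, k./2).
Proof.
move=> H [|k]; first by rewrite !bin0.
rewrite binS oddD !H.
case: (nat_split k) => [[j ->]|[j ->]].
- by rewrite halfS2 doubleK /= odd_double /=.
- have -> : j.*2.+2 = (j.+1).*2 by [].
  by rewrite halfS2 doubleK odd_double /= odd_double addbF.
Qed.

Lemma lucas_even m k : odd 'C(m.*2, k) = ~~ odd k && odd 'C(m, k./2).
Proof.
elim: m k => [|m IH] k.
- rewrite /= !bin0n.
  case: (nat_split k) => [[j ->]|[j ->]].
  + by rewrite odd_double doubleK double_eq0.
  + by rewrite /= odd_double.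
- case: k => [|k]; first by rewrite !bin0.
  rewrite doubleS binS oddD !(lucas_odd_of m IH).
  case: (nat_split k) => [[j ->]|[j ->]].
  + by rewrite halfS2 doubleK addbb /= odd_double.
  + have -> : j.*2.+2 = (j.+1).*2 by [].
    by rewrite doubleK halfS2 odd_double /= binS oddD.
Qed.

Lemma lucas_odd m k : odd 'C(m.*2.+1, k) = odd 'C(m, k./2).
Proof. exact: (lucas_odd_of m (lucas_even m) k). Qed.

Lemma pow2_binom q k : odd 'C(2 ^ q, k) = (k == 0) || (k == 2 ^ q).
Proof.
elim: q k => [|q IH] k.
- by rewrite expn0; case: k => [|[|k]].
- rewrite expnS mul2n lucas_even.
  case: (nat_split k) => [[j ->]|[j ->]].
  + rewrite odd_double doubleK IH /= double_eq0.
    have -> : (j.*2 == (2 ^ q).*2) = (j == 2 ^ q) by apply/eqP/eqP; lia.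
    by [].
  + rewrite /= odd_double /=. lia.
Qed.

Lemma allones b k : odd 'C(2 ^ b - 1, k) = (k < 2 ^ b).
Proof.
elim: b k => [|b IH] k.
- by rewrite expn0 subnn bin0n; case: k.
- have -> : 2 ^ b.+1 - 1 = (2 ^ b - 1).*2.+1.
    have : 0 < 2 ^ b by rewrite expn_gt0.
    rewrite expnS; lia.
  by rewrite lucas_odd IH ltn_half_double expnS mul2n.
Qed.

Lemma Qt_pow2 q n k : Qt (2 ^ q) n k = odd 'C(n + 2 ^ q, k).
Proof.
have tp : 0 < 2 ^ q by rewrite expn_gt0.
elim: n k => [|n IH] k.
- rewrite /Qt /Bt add0n pow2_binom bin0n.
  case: (ltngtP (2 ^ q) k) => H.
  + rewrite bin0n; have -> : (k - 2 ^ q == 0) = false by lia.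
    by have -> : (k == 0) = false by lia.
  + by rewrite addn0 oddb orbF.
  + have -> : (k == 0) = false by lia.
    by rewrite orbT -H subnn.
- case: k => [|k].
  + by rewrite /Qt Bt0 // !bin0.
  + rewrite /Qt binS Bt_pascal addSn binS.
    have -> : 'C(n, k.+1) + 'C(n, k) + (Bt (2 ^ q) n k + Bt (2 ^ q) n k.+1)
       = ('C(n, k.+1) + Bt (2 ^ q) n k.+1) + ('C(n, k) + Bt (2 ^ q) n k) by lia.
    rewrite oddD [in RHS]oddD.
    by have := IH k; have := IH k.+1; rewrite /Qt => -> ->.
Qed.

Lemma cnt_ext (P : pred nat) L e : (forall k, L <= k < L + e -> ~~ P k) ->
  count P (iota 0 (L + e)) = count P (iota 0 L).
Proof.
move=> H; rewrite iotaD count_cat.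
have -> : count P (iota (0 + L) e) = 0.
  rewrite (@eq_in_count _ P pred0) ?count_pred0 // => k.
  by rewrite mem_iota add0n => /H /negbTE.
by rewrite addn0.
Qed.

Lemma cnt_ext2 (P : pred nat) L L' : L <= L' -> (forall k, L <= k -> ~~ P k) ->
  count P (iota 0 L') = count P (iota 0 L).
Proof.
move=> hL H; have -> : L' = L + (L' - L) by lia.
apply: cnt_ext => k /andP [h _]; exact: H.
Qed.

Lemma cnt_split (P : pred nat) N : count P (iota 0 N.*2) =
  count (fun j => P j.*2) (iota 0 N) + count (fun j => P j.*2.+1) (iota 0 N).
Proof.
elim: N => [|N IH] //.
have -> : N.+1.*2 = N.*2 + 2 by lia.
have -> : iota 0 N.+1 = iota 0 N ++ [:: N] by rewrite -addn1 iotaD.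
rewrite iotaD count_cat IH !count_cat /= !add0n !addn0.
lia.
Qed.

Lemma aux_stable f f' m : m <= f -> m <= f' -> bin_digits_aux f m = bin_digits_aux f' m.
Proof.
elim: f f' m => [|f IH] [|f'] m H1 H2 //=.
- by have -> : m = 0 by lia.
- by have -> : m = 0 by lia.
- by rewrite (IH f') //; rewrite leq_half_double; lia.
Qed.

Lemma d_half m : 0 < m -> d m = odd m + d m./2.
Proof.
case: m => // f _; rewrite /d /=; congr (_ + _).
apply: aux_stable; rewrite ?leq_uphalf_double; lia.
Qed.

Lemma d_double j : d j.*2 = d j.
Proof.
case: j => [|j] //; rewrite d_half ?double_gt0 // odd_double doubleK //.
Qed.

Lemma d_doubleS j : d j.*2.+1 = (d j).+1.
Proof. by rewrite d_half // halfS2 /= odd_double. Qed.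

Lemma cnt_binom_ext m L : m < L ->
  count (fun k => odd 'C(m, k)) (iota 0 L) = count (fun k => odd 'C(m, k)) (iota 0 m.+1).
Proof.
move=> h; apply: cnt_ext2 => // k hk; by rewrite bin_small.
Qed.

Lemma cnt_binom m : count (fun k => odd 'C(m, k)) (iota 0 m.+1) = 2 ^ d m.
Proof.
elim/ltn_ind: m => m IH.
case: m IH => [|m] IH; first by [].
case: (nat_split m.+1) => [[j Hj]|[j Hj]]; rewrite Hj.
- have hj : j < m.+1 by lia.
  rewrite -(@cnt_binom_ext _ (j.+1).*2); last by lia.
  rewrite cnt_split d_double -(IH j hj).
  rewrite (@eq_count _ _ (fun k => odd 'C(j, k))); last by move=> x; rewrite /= lucas_even odd_double doubleK.
  rewrite (@eq_count _ (fun k => odd 'C(j.*2, k.*2.+1)) pred0); last by move=> x; rewrite /= lucas_even /= odd_double.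
  by rewrite count_pred0 addn0.
- have hj : j < m.+1 by lia.
  have -> : j.*2.+2 = (j.+1).*2 by [].
  rewrite cnt_split d_doubleS expnS -(IH j hj).
  rewrite (@eq_count _ _ (fun k => odd 'C(j, k))); last by move=> x; rewrite /= lucas_odd doubleK.
  rewrite (@eq_count _ (fun k => odd 'C(j.*2.+1, k.*2.+1)) (fun k => odd 'C(j, k))); last by move=> x; rewrite /= lucas_odd halfS2.
  lia.
Qed.

Lemma count_split (Q A : pred nat) s :
  count Q s = count (fun k => Q k && A k) s + count (fun k => Q k && ~~ A k) s.
Proof. elim: s => //= x s ->; case: (Q x); case: (A x) => /=; lia. Qed.

Lemma rev_perm N : perm_eq (map (fun k => N - k) (iota 0 N.+1)) (iota 0 N.+1).
Proof.
apply: uniq_perm.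
- rewrite map_inj_in_uniq ?iota_uniq // => x y; rewrite !mem_iota; lia.
- exact: iota_uniq.
- move=> x; rewrite mem_iota; apply/mapP/idP.
  + by case=> y; rewrite mem_iota => hy ->; lia.
  + move=> hx; exists (N - x); rewrite ?mem_iota; lia.
Qed.

Lemma half_count (Q : pred nat) N :
  (forall k, k <= N -> Q (N - k) = Q k) -> (forall h, N = h.*2 -> Q h = false) ->
  2 * count (fun k => Q k && (k.*2 < N)) (iota 0 N.+1) = count Q (iota 0 N.+1).
Proof.
move=> Hs Hm.
rewrite (count_split Q (fun k => k.*2 < N)).
have -> : count (fun k => Q k && ~~ (k.*2 < N)) (iota 0 N.+1)
        = count (fun k => Q k && (N < k.*2)) (iota 0 N.+1).
  apply: eq_count => k /=.
  case: (ltngtP (k.*2) N) => H; rewrite /= ?andbF ?andbT //.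
  by rewrite (Hm k (esym H)).
have -> : count (fun k => Q k && (N < k.*2)) (iota 0 N.+1)
        = count (fun k => Q k && (k.*2 < N)) (iota 0 N.+1).
  move/permP: (rev_perm N) => Pm.
  rewrite -Pm count_map.
  apply: eq_in_count => k; rewrite mem_iota => hk /=.
  rewrite Hs; last by lia.
  congr (_ && _); apply/idP/idP; lia.
lia.
Qed.

Lemma Qt_sym t n k : k <= n + t -> Qt t n (n + t - k) = Qt t n k.
Proof.
move=> hk; rewrite /Qt; congr odd; rewrite [RHS]addnC /Bt; congr (_ + _).
- case: (leqP t k) => h.
  + have -> : n + t - k = n - (k - t) by lia.
    rewrite bin_sub //; lia.
  + rewrite bin_small //; lia.
- case: (leqP k n) => h.
  + have -> : (t <= n + t - k) = true by lia.
    have -> : n + t - k - t = n - k by lia.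
    by rewrite bin_sub.
  + have -> : (t <= n + t - k) = false by lia.
    by rewrite bin_small.
Qed.

Lemma Qt_mid t n h : n + t = h.*2 -> Qt t n h = false.
Proof.
move=> e; rewrite /Qt /Bt; case: (leqP t h) => H.
- have -> : h - t = n - h by lia.
  by rewrite bin_sub ?addnn ?odd_double //; lia.
- by rewrite bin_small ?addn0 //; lia.
Qed.

Lemma Qt_big t n k : n + t < k -> Qt t n k = false.
Proof.
move=> h; rewrite /Qt /Bt bin_small; last by lia.
case: leqP => H; last by [].
by rewrite bin_small //; lia.
Qed.

Definition T t n := count (Qt t n) (iota 0 (n + t).+1).

Lemma T_ext t n L : n + t < L -> count (Qt t n) (iota 0 L) = T t n.
Proof. move=> h; apply: cnt_ext2 => // k hk; rewrite Qt_big //. Qed.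

Lemma odd_entries_Q t n : 0 < t ->
  odd_entries t n = count (fun k => Qt t n k && (k.*2 < n + t)) (iota 0 (n + t).+1).
Proof.
move=> ht; rewrite /odd_entries.
have -> : (n + t).+1 = n.+1 + t by lia.
rewrite iotaD count_cat.
have -> : count (fun k => Qt t n k && (k.*2 < n + t)) (iota (0 + n.+1) t) = 0.
  rewrite (@eq_in_count _ _ pred0) ?count_pred0 // => k; rewrite mem_iota add0n => hk /=.
  case: (ltnP (k.*2) (n + t)) => h; last by rewrite andbF.
  rewrite /Qt /Bt bin_small; last by lia.
  by have -> : (t <= k) = false by lia.
rewrite addn0; apply: eq_in_count => k; rewrite mem_iota => hk /=.
have [S1 S2] := trunc_spec t n k ht.
case: (ltnP (k.*2) (n + t)) => h.
- rewrite andbT /Qt -S1; last by apply/andP; split; lia.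
  by rewrite -addnA oddD addnn odd_double addbF.
- rewrite andbF S2 //; apply/negP => /andP [_ h']; lia.
Qed.

Lemma twice_odd_entries t n : 0 < t -> 2 * odd_entries t n = T t n.
Proof.
move=> ht; rewrite odd_entries_Q // /T; apply: half_count.
- by move=> k hk; apply: Qt_sym.
- by move=> h; apply: Qt_mid.
Qed.

Lemma Qt_scale_even t n j : Qt t.*2 n.*2 j.*2 = Qt t n j.
Proof.
rewrite /Qt /Bt leq_double; case: (t <= j).
- by rewrite -doubleB !oddD !lucas_even !odd_double !doubleK.
- by rewrite !addn0 lucas_even odd_double doubleK.
Qed.

Lemma Qt_scale_odd t n j : Qt t.*2 n.*2 j.*2.+1 = false.
Proof.
rewrite /Qt /Bt leq_Sdouble; case: leqP => h.
- have -> : j.*2.+1 - t.*2 = (j - t).*2.+1 by rewrite doubleB; lia.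
  by rewrite oddD !lucas_even /= !odd_double.
- by rewrite addn0 lucas_even /= odd_double.
Qed.

Lemma T_double t n : T t.*2 n.*2 = T t n.
Proof.
rewrite -(@T_ext _ _ (n + t).+1.*2); last by lia.
rewrite cnt_split.
rewrite (@eq_count _ (fun j => Qt t.*2 n.*2 j.*2) (Qt t n)); last by move=> x; exact: Qt_scale_even.
rewrite (@eq_count _ (fun j => Qt t.*2 n.*2 j.*2.+1) pred0); last by move=> x; exact: Qt_scale_odd.
by rewrite count_pred0 addn0 /T.
Qed.

Lemma T_pow2mul a t n : T (2 ^ a * t) (2 ^ a * n) = T t n.
Proof.
elim: a => [|a IH]; first by rewrite !mul1n.
by rewrite expnS -!mulnA !mul2n T_double.
Qed.

Lemma T_witness s b : 0 < s -> s < 2 ^ b -> T s (2 ^ b - 1) = s.*2.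
Proof.
move=> hs hb; rewrite /T.
have E : forall k, Qt s (2 ^ b - 1) k = (k < 2 ^ b) (+) ((s <= k) && (k - s < 2 ^ b)).
  move=> k; rewrite /Qt /Bt; case: (leqP s k) => _; by rewrite ?addn0 ?oddD !allones /= ?addbF.
move: E; set M := 2 ^ b => E.
have -> : (M - 1 + s).+1 = s + (M - s) + s by lia.
rewrite !iotaD !count_cat !add0n.
rewrite (@eq_in_count _ _ predT (iota 0 s)); last first.
  move=> k; rewrite mem_iota E => hk.
  have h1 : (k < M) = true by lia.
  have h2 : (s <= k) = false by lia.
  by rewrite h1 h2.
rewrite (@eq_in_count _ _ pred0 (iota s (M - s))); last first.
  move=> k; rewrite mem_iota E => hk.
  have h1 : (k < M) = true by lia.
  have h2 : (s <= k) = true by lia.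
  have h3 : (k - s < M) = true by lia.
  by rewrite h1 h2 h3.
rewrite (@eq_in_count _ _ predT (iota (s + (M - s)) s)); last first.
  move=> k; rewrite mem_iota E => hk.
  have h1 : (k < M) = false by lia.
  have h2 : (s <= k) = true by lia.
  have h3 : (k - s < M) = true by lia.
  by rewrite h1 h2 h3.
rewrite !count_predT count_pred0 !size_iota; lia.
Qed.

Lemma decomp t : 0 < t -> exists a s, t = 2 ^ a * s /\ odd s.
Proof.
elim/ltn_ind: t => t IH ht.
case Ot: (odd t); first by exists 0, t; rewrite mul1n.
have e : t = (t./2).*2 by rewrite even_halfK // Ot.
have h1 : t./2 < t by lia.
have h2 : 0 < t./2 by lia.
have [a [s [Ha Hs]]] := IH _ h1 h2.
by exists a.+1, s; rewrite expnS -mulnA -Ha mul2n.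
Qed.

Lemma pow2_of_twice x D : 2 * x = 2 ^ D -> is_pow2 x.
Proof.
case: D => [|D]; first by rewrite expn0; lia.
by rewrite expnS => h; exists D; lia.
Qed.

Theorem theorem4p3 (t : nat) (ht : 0 < t) :
  ((forall n : nat, is_pow2 (odd_entries t n)) <-> is_pow2 t) /\
  (is_pow2 t -> forall n : nat, 2 * odd_entries t n = 2 ^ d (n + t)).
Proof.
have partB : is_pow2 t -> forall n : nat, 2 * odd_entries t n = 2 ^ d (n + t).
  move=> [q ->] n; rewrite twice_odd_entries ?expn_gt0 // /T.
  rewrite (@eq_count _ _ (fun k => odd 'C(n + 2 ^ q, k))); last by move=> k; exact: Qt_pow2.
  exact: cnt_binom.
split=> //; split.
- move=> H.
  have [a [s [Ha Hs]]] := decomp t ht.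
  case: (eqVneq s 1) => [e|ne]; first by exists a; rewrite Ha e muln1.
  have hs : 0 < s by case: s Hs {Ha ne}.
  have hsb : s < 2 ^ s by apply: ltn_expl.
  have := twice_odd_entries t (2 ^ a * (2 ^ s - 1)) ht.
  rewrite {2}Ha T_pow2mul T_witness // => E.
  have [e He] := H (2 ^ a * (2 ^ s - 1)).
  move: E; rewrite He => E.
  have Es : s = 2 ^ e by lia.
  move: Hs ne; rewrite Es oddX /=; case: e {He E Es} => //.
- move=> Hp n; exact: (pow2_of_twice _ _ (partB Hp n)).
Qed.
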